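(* Let $f:X\to Y$ be a local homeomorphism between metric spaces, where $X$ is complete and $Y$ is path-connected and locally $\mathcal R$-contractible. If there exists $\alpha>0$ such that $D_x^-f\ge\alpha$ for all $x\in X$, then $f$ is a covering projection.
   Context: A path $p:[0,1]\to Y$ is rectifiable if its length $\sup\sum_i d(p(t_i),p(t_{i+1}))$ (over partitions of $[0,1]$) is finite. $Y$ is locally $\mathcal R$-contractible if every $y_0\in Y$ has an open neighborhood $U$ with a continuous homotopy $H:U\times[0,1]\to U$ such that $H(y_0,t)=y_0$ for all $t$, $H(y,0)=y_0$, $H(y,1)=y$ for all $y\in U$, and each path $t\mapsto H(y,t)$ is rectifiable. For non-isolated $x\in X$, $D_x^-f=\liminf_{z\to x,\,z\neq x}\frac{d(f(z),f(x))}{d(z,x)}$; $X$ is assumed to have no isolated points. *)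

(* Defs.v *)
From Stdlib Require Import Reals.
Open Scope R_scope.

Section MetricDefs.

Definition is_metric {X : Type} (d : X -> X -> R) : Prop :=
  (forall x y, 0 <= d x y) /\
  (forall x y, d x y = 0 <-> x = y) /\
  (forall x y, d x y = d y x) /\
  (forall x y z, d x z <= d x y + d y z).

Definition open_in {X : Type} (d : X -> X -> R) (U : X -> Prop) : Prop :=
  forall x, U x -> exists e, 0 < e /\ forall y, d x y < e -> U y.

Definition cont_within {X Y : Type} (dX : X -> X -> R) (dY : Y -> Y -> R)
  (A : X -> Prop) (f : X -> Y) (x : X) : Prop :=
  forall e, 0 < e -> exists del, 0 < del /\
    forall x', A x' -> dX x x' < del -> dY (f x) (f x') < e.

Definition continuous_map {X Y : Type} (dX : X -> X -> R) (dY : Y -> Y -> R)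
  (f : X -> Y) : Prop :=
  forall x, cont_within dX dY (fun _ => True) f x.

Definition homeo_onto {X Y : Type} (dX : X -> X -> R) (dY : Y -> Y -> R)
  (f : X -> Y) (U : X -> Prop) (V : Y -> Prop) : Prop :=
  (forall x, U x -> cont_within dX dY U f x) /\
  (forall x, U x -> V (f x)) /\
  (forall x1 x2, U x1 -> U x2 -> f x1 = f x2 -> x1 = x2) /\
  exists g : Y -> X,
    (forall y, V y -> U (g y) /\ f (g y) = y) /\
    (forall y, V y -> cont_within dY dX V g y).

Definition local_homeomorphism {X Y : Type} (dX : X -> X -> R)
  (dY : Y -> Y -> R) (f : X -> Y) : Prop :=
  continuous_map dX dY f /\
  forall x, exists (U : X -> Prop) (V : Y -> Prop),
    open_in dX U /\ U x /\ open_in dY V /\ homeo_onto dX dY f U V.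

Definition cauchy_seq {X : Type} (d : X -> X -> R) (u : nat -> X) : Prop :=
  forall e, 0 < e -> exists N, forall m n, (N <= m)%nat -> (N <= n)%nat ->
    d (u m) (u n) < e.

Definition converges_to {X : Type} (d : X -> X -> R) (u : nat -> X) (l : X)
  : Prop :=
  forall e, 0 < e -> exists N, forall n, (N <= n)%nat -> d (u n) l < e.

Definition complete_metric {X : Type} (d : X -> X -> R) : Prop :=
  forall u, cauchy_seq d u -> exists l, converges_to d u l.

Definition dR (s t : R) : R := Rabs (s - t).

Definition unit_interval (t : R) : Prop := 0 <= t <= 1.

(* a path is a continuous map [0,1] -> Y (values outside [0,1] irrelevant) *)
Definition is_path {Y : Type} (dY : Y -> Y -> R) (p : R -> Y) : Prop :=
  forall t, unit_interval t -> cont_within dR dY unit_interval p t.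

Definition path_connected {Y : Type} (dY : Y -> Y -> R) : Prop :=
  forall y1 y2, exists p : R -> Y, is_path dY p /\ p 0 = y1 /\ p 1 = y2.

Definition is_partition (t : nat -> R) (n : nat) : Prop :=
  t O = 0 /\ t (S n) = 1 /\ forall i, (i <= n)%nat -> t i <= t (S i).

Definition partition_sum {Y : Type} (dY : Y -> Y -> R) (p : R -> Y)
  (t : nat -> R) (n : nat) : R :=
  sum_f_R0 (fun i => dY (p (t i)) (p (t (S i)))) n.

Definition rectifiable {Y : Type} (dY : Y -> Y -> R) (p : R -> Y) : Prop :=
  exists M, forall t n, is_partition t n -> partition_sum dY p t n <= M.

Definition locally_R_contractible {Y : Type} (dY : Y -> Y -> R) : Prop :=
  forall y0, exists U : Y -> Prop, open_in dY U /\ U y0 /\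
    exists H : Y -> R -> Y,
      (forall y t, U y -> unit_interval t -> U (H y t)) /\
      (forall y t, U y -> unit_interval t ->
         forall e, 0 < e -> exists del, 0 < del /\
           forall y' t', U y' -> unit_interval t' ->
             dY y y' < del -> dR t t' < del -> dY (H y t) (H y' t') < e) /\
      (forall t, unit_interval t -> H y0 t = y0) /\
      (forall y, U y -> H y 0 = y0) /\
      (forall y, U y -> H y 1 = y) /\
      (forall y, U y -> rectifiable dY (H y)).

(* "D_x^- f >= alpha", i.e.
   liminf_{z -> x, z <> x} d(f z, f x) / d(z, x) >= alpha, written out:
   for every beta < alpha the ratio is >= beta on some punctured ball at x. *)
Definition lower_dini_ge {X Y : Type} (dX : X -> X -> R) (dY : Y -> Y -> R)
  (f : X -> Y) (x : X) (alpha : R) : Prop :=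
  forall beta, beta < alpha -> exists del, 0 < del /\
    forall z, z <> x -> dX z x < del -> beta <= dY (f z) (f x) / dX z x.

Definition no_isolated_points {X : Type} (d : X -> X -> R) : Prop :=
  forall x e, 0 < e -> exists z, z <> x /\ d z x < e.

Definition evenly_covered {X Y : Type} (dX : X -> X -> R) (dY : Y -> Y -> R)
  (f : X -> Y) (V : Y -> Prop) : Prop :=
  exists (I : Type) (W : I -> X -> Prop),
    (forall i, open_in dX (W i)) /\
    (forall i j x, W i x -> W j x -> i = j) /\
    (forall x, V (f x) <-> exists i, W i x) /\
    (forall i, homeo_onto dX dY f (W i) V).

Definition covering_projection {X Y : Type} (dX : X -> X -> R)
  (dY : Y -> Y -> R) (f : X -> Y) : Prop :=
  continuous_map dX dY f /\
  forall y, exists V : Y -> Prop, open_in dY V /\ V y /\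
    evenly_covered dX dY f V.

End MetricDefs.

(* Main.v *)
Require Import Defs.
From Stdlib Require Import Reals.
From Stdlib Require Import Lra Lia List Classical ClassicalEpsilon ProofIrrelevance.
Open Scope R_scope.

Ltac rsolve := unfold dR, Rmin, Rmax in *;
  repeat match goal with
  | |- context[Rle_dec ?a ?b] => destruct (Rle_dec a b)
  | H: context[Rle_dec ?a ?b] |- _ => destruct (Rle_dec a b)
  end; repeat match goal with |- _ /\ _ => split end; try split_Rabs; lra.

Lemma real_ind (P : R -> Prop) (a b : R) : a <= b ->
  (forall s, a <= s <= b -> (forall t, a <= t < s -> P t) ->
     exists eta, 0 < eta /\ forall t, a <= t <= b -> t < s + eta -> P t) ->
  forall t, a <= t <= b -> P t.
Proof.
  intros Hab Hstep.
  set (E := fun s => a <= s <= b /\ forall t, a <= t < s -> P t).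
  assert (HB : bound E) by (exists b; intros s [Hs _]; lra).
  assert (HE : exists s, E s) by (exists a; split; [lra| intros; lra]).
  destruct (completeness E HB HE) as [c [Hub Hlub]].
  assert (Hac : a <= c) by (apply Hub; split; [lra| intros; lra]).
  assert (Hcb : c <= b) by (apply Hlub; intros s [Hs _]; lra).
  assert (Hbelow : forall t, a <= t < c -> P t).
  { intros t Ht. apply NNPP; intro HP.
    assert (c <= t); [|lra].
    apply Hlub. intros s [Hs Hs2].
    destruct (Rle_dec s t) as [|Hn]; [lra|].
    exfalso; apply HP; apply Hs2; lra. }
  destruct (Hstep c (conj Hac Hcb) Hbelow) as [eta [Heta HP]].
  destruct (Rle_dec b c) as [Hbc|Hbc].
  - intros t Ht. apply HP; lra.
  - exfalso.
    assert (E (Rmin (c + eta/2) b)).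
    { split. rsolve. intros t Ht. apply HP. rsolve. rsolve. }
    apply Hub in H. rsolve.
Qed.

Section Metric.
Variables (X : Type) (dX : X -> X -> R) (hX : is_metric dX).

Lemma d_nonneg x y : 0 <= dX x y. Proof. apply hX. Qed.
Lemma d_sym x y : dX x y = dX y x. Proof. apply hX. Qed.
Lemma d_tri x y z : dX x z <= dX x y + dX y z. Proof. apply hX. Qed.
Lemma d_refl x : dX x x = 0. Proof. apply hX; reflexivity. Qed.
Lemma d_eq x y : dX x y = 0 -> x = y. Proof. apply hX. Qed.
Lemma d_small_eq x y : (forall e, 0 < e -> dX x y < e) -> x = y.
Proof.
  intros H. apply d_eq. destruct (Rle_dec (dX x y) 0).
  - pose proof (d_nonneg x y); lra.
  - specialize (H (dX x y)). lra.
Qed.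
End Metric.


Fixpoint srt (l : list R) : Prop :=
  match l with
  | a :: ((b :: _) as l') => a <= b /\ srt l'
  | _ => True
  end.

Section Chain.
Variables (Y : Type) (dY : Y -> Y -> R) (hY : is_metric dY).

Fixpoint cs (h : R -> Y) (l : list R) : R :=
  match l with
  | a :: ((b :: _) as l') => dY (h a) (h b) + cs h l'
  | _ => 0
  end.

Lemma cs_nonneg h l : 0 <= cs h l.
Proof.
  induction l as [|a l IH]; simpl; [lra|].
  destruct l as [|b l]; [lra|]. pose proof (d_nonneg _ _ hY (h a) (h b)); lra.
Qed.

Lemma cs_cons h a l : cs h (a :: l) =
  match l with nil => 0 | b :: _ => dY (h a) (h b) end + cs h l.
Proof. destruct l; simpl; lra. Qed.

Lemma cs_app_ge h l1 l2 : cs h l1 + cs h l2 <= cs h (l1 ++ l2).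
Proof.
  induction l1 as [|a l1 IH].
  - simpl; lra.
  - rewrite <- app_comm_cons, !cs_cons.
    destruct l1 as [|b l1].
    + simpl. destruct l2 as [|c l2]; simpl; [lra|].
      pose proof (d_nonneg _ _ hY (h a) (h c)); lra.
    + simpl app in *. lra.
Qed.

Lemma cs_snoc2 h l b a : cs h (l ++ b :: a :: nil) = cs h (l ++ b :: nil) + dY (h b) (h a).
Proof.
  induction l as [|x l IH].
  - simpl; lra.
  - rewrite <- !app_comm_cons, !cs_cons, IH.
    destruct l; simpl; lra.
Qed.

Lemma cs_rev h l : cs h (rev l) = cs h l.
Proof.
  induction l as [|a l IH]; [reflexivity|].
  rewrite cs_cons. simpl rev.
  destruct l as [|b l].
  - simpl; lra.
  - simpl rev. rewrite <- app_assoc. simpl app.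
    rewrite cs_snoc2. simpl rev in IH. rewrite IH, (d_sym _ _ hY (h b)). lra.
Qed.

Lemma cs_map h g l : cs h (map g l) = cs (fun t => h (g t)) l.
Proof.
  induction l as [|a l IH]; [reflexivity|].
  simpl map. rewrite !cs_cons, IH. destruct l; reflexivity.
Qed.

End Chain.
Arguments cs {Y} dY h l.

Lemma srt_cons a l : srt (a :: l) <-> (match l with nil => True | b :: _ => a <= b end) /\ srt l.
Proof. destruct l; simpl; tauto. Qed.

Lemma srt_app l1 l2 c : srt l1 -> srt l2 -> Forall (fun u => u <= c) l1 ->
  Forall (fun u => c <= u) l2 -> srt (l1 ++ l2).
Proof.
  induction l1 as [|a l1 IH]; intros H1 H2 F1 F2; [exact H2|].
  rewrite <- app_comm_cons. apply srt_cons. apply srt_cons in H1 as [Ha H1].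
  inversion F1; subst. split.
  - destruct l1 as [|b l1]; simpl.
    + destruct l2 as [|d l2]; auto. inversion F2; subst; lra.
    + exact Ha.
  - apply IH; auto.
Qed.

Fixpoint asrt (l : list R) : Prop :=
  match l with
  | a :: ((b :: _) as l') => b <= a /\ asrt l'
  | _ => True
  end.

Lemma asrt_cons a l : asrt (a :: l) <-> (match l with nil => True | b :: _ => b <= a end) /\ asrt l.
Proof. destruct l; simpl; tauto. Qed.

Lemma srt_map_neg l : srt l -> asrt (map (fun t => 1 - t) l).
Proof.
  induction l as [|a l IH]; simpl; auto.
  intros H. apply srt_cons in H as [Ha H]. apply asrt_cons. split; auto.
  destruct l; simpl; auto; lra.
Qed.

Lemma asrt_bound a l : asrt (a :: l) -> Forall (fun u => u <= a) l.
Proof.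
  revert a; induction l as [|b l IH]; intros a H; constructor.
  - destruct H; auto.
  - destruct H as [Hba H]. specialize (IH b H).
    eapply Forall_impl; [|exact IH]. intros; simpl in *; lra.
Qed.

Lemma asrt_rev l : asrt l -> srt (rev l).
Proof.
  induction l as [|a l IH]; simpl; auto.
  intros H. pose proof (asrt_bound _ _ H) as Hb.
  apply asrt_cons in H as [_ H].
  apply srt_app with a.
  - apply IH; auto.
  - simpl; auto.
  - apply Forall_rev; auto.
  - constructor; [lra| constructor].
Qed.

Lemma srt_nth L : srt L -> forall i, (S i < length L)%nat -> nth i L 0 <= nth (S i) L 0.
Proof.
  induction L as [|a L IH]; intros H i Hi; simpl in Hi; [lia|].
  apply srt_cons in H as [Ha H].
  destruct i as [|i].
  - destruct L as [|b L]; simpl in *; [lia| exact Ha].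
  - simpl. apply IH; auto. lia.
Qed.

Section Rect.
Variables (Y : Type) (dY : Y -> Y -> R) (hY : is_metric dY).

Lemma partition_cs (p : R -> Y) L a b :
  sum_f_R0 (fun i => dY (p (nth i (a :: b :: L) 0)) (p (nth (S i) (a :: b :: L) 0)))
    (length (a :: b :: L) - 2) = cs dY p (a :: b :: L).
Proof.
  revert a b; induction L as [|c L IH]; intros a b.
  - simpl. lra.
  - replace (length (a :: b :: c :: L) - 2)%nat with (S (length L)) by (simpl; lia).
    rewrite decomp_sum by lia. simpl pred.
    specialize (IH b c). replace (length (b :: c :: L) - 2)%nat with (length L) in IH by (simpl; lia).
    change (cs dY p (a :: b :: c :: L)) with (dY (p a) (p b) + cs dY p (b :: c :: L)).
    change (cs dY p (a :: b :: c :: L)) with (dY (p a) (p b) + cs dY p (b :: c :: L)).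
    rewrite <- IH. simpl nth at 1 2. reflexivity.
Qed.

Lemma rect_list (p : R -> Y) : rectifiable dY p ->
  exists M, forall l, srt l -> Forall unit_interval l -> cs dY p l <= M.
Proof.
  intros [M HM]. exists M. intros l Hs Hf.
  set (L := 0 :: l ++ 1 :: nil).
  assert (HsL : srt L).
  { unfold L. change (0 :: l ++ 1 :: nil) with ((0 :: nil) ++ (l ++ 1 :: nil)).
    apply srt_app with 0; [simpl; auto | | |].
    - apply srt_app with 1; [auto | simpl; auto | |].
      + eapply Forall_impl; [|exact Hf]. unfold unit_interval; intros; lra.
      + constructor; [lra|constructor].
    - constructor; [lra|constructor].
    - apply Forall_app; split.
      + eapply Forall_impl; [|exact Hf]. unfold unit_interval; intros; lra.
      + constructor; [lra|constructor]. }
  assert (HlenL : length L = (length l + 2)%nat).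
  { unfold L. simpl. rewrite length_app. simpl. lia. }
  set (t := fun i => nth i L 0).
  assert (Hpart : is_partition t (length l)).
  { split; [reflexivity|]. split.
    - unfold t, L. simpl nth. rewrite app_nth2 by lia. rewrite Nat.sub_diag. reflexivity.
    - intros i Hi. unfold t. apply srt_nth; auto. lia. }
  specialize (HM t (length l) Hpart).
  assert (Hps : partition_sum dY p t (length l) = cs dY p L).
  { unfold partition_sum, t.
    destruct l as [|a l'].
    - simpl. lra.
    - unfold L. simpl app.
      pose proof (partition_cs p (l' ++ 1 :: nil) 0 a) as E.
      replace (length _ - 2)%nat with (length (a :: l')) in E.
      + exact E.
      + simpl. rewrite length_app. simpl. lia. }
  assert (cs dY p l <= cs dY p L).
  { unfold L. change (0 :: l ++ 1 :: nil) with ((0 :: nil) ++ (l ++ 1 :: nil)).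
    pose proof (cs_app_ge _ _ hY p (0 :: nil) (l ++ 1 :: nil)).
    pose proof (cs_app_ge _ _ hY p l (1 :: nil)).
    simpl cs in *. lra. }
  lra.
Qed.
End Rect.


Definition cont_on {W : Type} (dW : W -> W -> R) (q : R -> W) (a b : R) : Prop :=
  forall t, a <= t <= b -> cont_within dR dW (fun u => a <= u <= b) q t.

Section Cont.
Variables (Z W : Type) (dZ : Z -> Z -> R) (dW : W -> W -> R).

Lemma cont_sub (A B : Z -> Prop) (q : Z -> W) t :
  (forall u, A u -> B u) -> cont_within dZ dW B q t -> cont_within dZ dW A q t.
Proof.
  intros HAB H e He. destruct (H e He) as [d [Hd H']]. exists d; split; auto.
Qed.

Lemma cont_ext (A : Z -> Prop) (h q : Z -> W) t :
  (forall u, A u -> h u = q u) -> A t -> cont_within dZ dW A q t -> cont_within dZ dW A h t.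
Proof.
  intros Heq Ht H e He. destruct (H e He) as [d [Hd H']]. exists d; split; auto.
  intros x' Hx' Hd'. rewrite !Heq; auto.
Qed.
End Cont.

Lemma cont_on_sub {W : Type} (dW : W -> W -> R) q a b a' b' :
  a <= a' -> b' <= b -> cont_on dW q a b -> cont_on dW q a' b'.
Proof.
  intros H1 H2 H t Ht. apply cont_sub with (B := fun u => a <= u <= b).
  - intros; lra.
  - apply H; lra.
Qed.

Lemma cont_on_ext {W : Type} (dW : W -> W -> R) h q a b :
  (forall u, a <= u <= b -> h u = q u) -> cont_on dW q a b -> cont_on dW h a b.
Proof. intros Heq H t Ht. apply cont_ext with q; auto. Qed.

Lemma cont_comp {V W : Type} (dV : V -> V -> R) (dW : W -> W -> R)
  (A : R -> Prop) (VV : V -> Prop) (p : R -> V) (g : V -> W) t :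
  cont_within dR dV A p t -> A t -> (forall u, A u -> VV (p u)) ->
  cont_within dV dW VV g (p t) -> cont_within dR dW A (fun u => g (p u)) t.
Proof.
  intros Hp Ht HV Hg e He.
  destruct (Hg e He) as [d1 [Hd1 H1]].
  destruct (Hp d1 Hd1) as [d2 [Hd2 H2]].
  exists d2; split; auto.
Qed.

Lemma cont_split {W : Type} (dW : W -> W -> R) (D : R -> Prop) (h : R -> W) c t :
  (t <= c -> cont_within dR dW (fun u => D u /\ u <= c) h t) ->
  (c <= t -> cont_within dR dW (fun u => D u /\ c <= u) h t) ->
  cont_within dR dW D h t.
Proof.
  intros H1 H2 e He.
  destruct (Rle_dec t c) as [Htc|Htc]; destruct (Rle_dec c t) as [Hct|Hct].
  - destruct (H1 Htc e He) as [d1 [Hd1 K1]]. destruct (H2 Hct e He) as [d2 [Hd2 K2]].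
    exists (Rmin d1 d2). split; [apply Rmin_pos; auto|].
    intros x' Hx' Hd. destruct (Rle_dec x' c).
    + apply K1; [split; auto|]. pose proof (Rmin_l d1 d2); lra.
    + apply K2; [split; auto; lra|]. pose proof (Rmin_r d1 d2); lra.
  - destruct (H1 Htc e He) as [d1 [Hd1 K1]].
    exists (Rmin d1 (c - t)). split; [apply Rmin_pos; lra|].
    intros x' Hx' Hd. apply K1.
    + split; auto. unfold dR in Hd. pose proof (Rmin_r d1 (c - t)). split_Rabs; lra.
    + pose proof (Rmin_l d1 (c - t)); lra.
  - destruct (H2 Hct e He) as [d1 [Hd1 K1]].
    exists (Rmin d1 (t - c)). split; [apply Rmin_pos; lra|].
    intros x' Hx' Hd. apply K1.
    + split; auto. unfold dR in Hd. pose proof (Rmin_r d1 (t - c)). split_Rabs; lra.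
    + pose proof (Rmin_l d1 (t - c)); lra.
  - lra.
Qed.

Lemma cont_rev {W : Type} (dW : W -> W -> R) q :
  cont_on dW q 0 1 -> cont_on dW (fun t => q (1 - t)) 0 1.
Proof.
  intros H t Ht e He. destruct (H (1 - t) ltac:(lra) e He) as [d [Hd K]].
  exists d; split; auto. intros x' Hx' Hdx. apply K; [lra|]. unfold dR in *.
  replace (1 - t - (1 - x')) with (- (t - x')) by ring. rewrite Rabs_Ropp; auto.
Qed.

Lemma cont_const {W : Type} (dW : W -> W -> R) (hW : is_metric dW) (x : W) A t :
  cont_within dR dW A (fun _ => x) t.
Proof. intros e He. exists 1; split; [lra|]. intros. rewrite d_refl; auto. Qed.

Section Lift.
Variables (X Y : Type) (dX : X -> X -> R) (dY : Y -> Y -> R) (f : X -> Y)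
  (hX : is_metric dX) (hY : is_metric dY) (hloc : local_homeomorphism dX dY f).

Lemma chart x : exists (U : X -> Prop) (V : Y -> Prop) (g : Y -> X),
  open_in dX U /\ U x /\ open_in dY V /\ (forall x', U x' -> V (f x')) /\
  (forall x1 x2, U x1 -> U x2 -> f x1 = f x2 -> x1 = x2) /\
  (forall y, V y -> U (g y) /\ f (g y) = y) /\
  (forall y, V y -> cont_within dY dX V g y).
Proof.
  destruct hloc as [_ H]. destruct (H x) as [U [V [HU [Hx [HV [_ [HfV [Hinj [g [Hg1 Hg2]]]]]]]]]].
  exists U, V, g. repeat split; auto; apply Hg1; auto.
Qed.

Lemma f_cont x : cont_within dX dY (fun _ => True) f x.
Proof. apply hloc. Qed.

Lemma lift_unique (q1 q2 : R -> X) a b : a <= b ->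
  cont_on dX q1 a b -> cont_on dX q2 a b ->
  (forall t, a <= t <= b -> f (q1 t) = f (q2 t)) -> q1 a = q2 a ->
  forall t, a <= t <= b -> q1 t = q2 t.
Proof.
  intros Hab C1 C2 Hf Ha.
  apply real_ind; auto.
  intros s Hs IH.
  assert (Es : q1 s = q2 s).
  { destruct (Req_dec s a) as [->|Hsa]; auto.
    apply (d_small_eq _ _ hX). intros e He.
    destruct (C1 s Hs (e/2) ltac:(lra)) as [d1 [Hd1 K1]].
    destruct (C2 s Hs (e/2) ltac:(lra)) as [d2 [Hd2 K2]].
    set (t := Rmax a (s - Rmin d1 d2 / 2)).
    assert (Hmin : 0 < Rmin d1 d2) by (apply Rmin_pos; auto).
    assert (Ht : a <= t < s) by (unfold t; rsolve).
    assert (Hdt : dR s t < Rmin d1 d2) by (unfold t; rsolve).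
    pose proof (Rmin_l d1 d2). pose proof (Rmin_r d1 d2).
    specialize (K1 t ltac:(lra) ltac:(lra)). specialize (K2 t ltac:(lra) ltac:(lra)).
    rewrite (IH t Ht) in K1.
    pose proof (d_tri _ _ hX (q1 s) (q2 t) (q2 s)). rewrite (d_sym _ _ hX (q2 t)) in H1. lra. }
  destruct (chart (q1 s)) as [U [V [g [HU [HUx [_ [_ [Hinj _]]]]]]]].
  destruct (HU _ HUx) as [r [Hr HUr]].
  destruct (C1 s Hs r Hr) as [d1 [Hd1 K1]].
  destruct (C2 s Hs r Hr) as [d2 [Hd2 K2]].
  exists (Rmin d1 d2). split; [apply Rmin_pos; auto|].
  intros t Ht Hts. destruct (Rlt_le_dec t s) as [Hlt|Hge]; [apply IH; lra|].
  pose proof (Rmin_l d1 d2). pose proof (Rmin_r d1 d2).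
  assert (dR s t < d1) by (unfold dR; split_Rabs; lra).
  assert (dR s t < d2) by (unfold dR; split_Rabs; lra).
  apply Hinj; [apply HUr, K1; auto | apply HUr; rewrite Es; apply K2; auto | apply Hf; lra].
Qed.

End Lift.


Section FP.
Variables (X Y : Type) (dX : X -> X -> R) (dY : Y -> Y -> R) (f : X -> Y)
  (hX : is_metric dX) (hY : is_metric dY) (alpha beta : R)
  (hD : forall x, lower_dini_ge dX dY f x alpha) (hb : 0 < beta < alpha).

Lemma dini_local (q : R -> X) (p : R -> Y) (D : R -> Prop) s :
  D s -> cont_within dR dX D q s -> (forall t, D t -> f (q t) = p t) ->
  exists del, 0 < del /\ forall t, D t -> dR s t < del -> beta * dX (q s) (q t) <= dY (p s) (p t).
Proof.
  intros Ds Hc Hf.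
  destruct (hD (q s) beta ltac:(lra)) as [del [Hdel Hdini]].
  destruct (Hc del Hdel) as [d [Hd K]].
  exists d; split; auto. intros t Dt Hdt.
  destruct (classic (q t = q s)) as [E|E].
  - rewrite E, d_refl by auto. pose proof (d_nonneg _ _ hY (p s) (p t)); lra.
  - specialize (K t Dt Hdt). rewrite d_sym in K by auto.
    specialize (Hdini (q t) E K).
    assert (Hpos : 0 < dX (q t) (q s)).
    { destruct (d_nonneg _ _ hX (q t) (q s)) as [H|H]; auto.
      exfalso; apply E; apply (d_eq _ _ hX); auto. }
    rewrite !Hf in Hdini by auto.
    apply (Rmult_le_compat_r (dX (q t) (q s))) in Hdini; [|lra].
    unfold Rdiv in Hdini. rewrite Rmult_assoc, Rinv_l, Rmult_1_r in Hdini by lra.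
    rewrite (d_sym _ _ hX (q s)), (d_sym _ _ hY (p s)). exact Hdini.
Qed.

Lemma fine_part (q : R -> X) (p : R -> Y) a b : a <= b -> cont_on dX q a b ->
  (forall t, a <= t <= b -> f (q t) = p t) ->
  exists l, srt l /\ Forall (fun u => a <= u <= b) l /\ beta * dX (q a) (q b) <= cs dY p l.
Proof.
  intros Hab Hc Hf.
  set (P := fun c => exists l, srt l /\ Forall (fun u => a <= u <= c) l /\
                     beta * dX (q a) (q c) <= cs dY p l).
  assert (Pa : P a).
  { exists nil. simpl. split; auto. split; auto. rewrite d_refl by auto. lra. }
  apply (real_ind P a b Hab); [|lra].
  intros s Hs IH.
  destruct (dini_local q p (fun u => a <= u <= b) s Hs (Hc s Hs) Hf) as [del [Hdel Hloc]].
  set (t0 := Rmax a (s - del/2)).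
  assert (Ht0 : a <= t0 <= s /\ s - t0 < del) by (unfold t0; rsolve).
  assert (Pt0 : P t0).
  { destruct (Rlt_le_dec t0 s) as [H|H]; [apply IH; lra|].
    replace t0 with a; auto. unfold t0 in *; rsolve. }
  exists del; split; auto. intros t Ht Hts.
  destruct (Rlt_le_dec t s) as [Hlt|Hge]; [apply IH; lra|].
  destruct Pt0 as [l0 [Hs0 [Hf0 Hb0]]].
  exists (l0 ++ t0 :: s :: t :: nil). split; [|split].
  - apply srt_app with t0; auto.
    + simpl; lra.
    + eapply Forall_impl; [|exact Hf0]; simpl; intros; lra.
    + repeat (apply Forall_cons; [simpl; lra|]); apply Forall_nil.
  - apply Forall_app; split.
    + eapply Forall_impl; [|exact Hf0]; simpl; intros; lra.
    + repeat (apply Forall_cons; [simpl; lra|]); apply Forall_nil.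
  - pose proof (cs_app_ge _ _ hY p l0 (t0 :: s :: t :: nil)). simpl cs in H.
    pose proof (Hloc t0 ltac:(lra) ltac:(unfold dR; split_Rabs; lra)).
    pose proof (Hloc t ltac:(lra) ltac:(unfold dR; split_Rabs; lra)).
    pose proof (d_tri _ _ hX (q a) (q t0) (q t)).
    pose proof (d_tri _ _ hX (q t0) (q s) (q t)).
    rewrite (d_sym _ _ hX (q t0) (q s)) in H3. rewrite (d_sym _ _ hY (p s) (p t0)) in H0.
    nra.
Qed.
End FP.

Section Glue.
Variables (X Y : Type) (dX : X -> X -> R) (dY : Y -> Y -> R) (f : X -> Y).

Lemma glue (q : R -> X) (p : R -> Y) (V : Y -> Prop) (g : Y -> X) c d :
  0 <= c <= d -> cont_on dX q 0 c -> (forall t, 0 <= t <= c -> f (q t) = p t) ->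
  cont_on dY p c d -> (forall t, c <= t <= d -> V (p t)) ->
  (forall y, V y -> cont_within dY dX V g y) -> (forall y, V y -> f (g y) = y) ->
  g (p c) = q c ->
  cont_on dX (fun t => if Rle_dec t c then q t else g (p t)) 0 d /\
  (forall t, 0 <= t <= d -> f (if Rle_dec t c then q t else g (p t)) = p t) /\
  (if Rle_dec 0 c then q 0 else g (p 0)) = q 0.
Proof.
  intros Hcd Hq Hfq Hp HV Hg Hfg Hgc. split; [|split].
  - intros t Ht. apply cont_split with c.
    + intros Htc. apply cont_ext with q.
      * intros u [_ Hu]. destruct (Rle_dec u c); [reflexivity|lra].
      * split; [lra|auto].
      * apply cont_sub with (B := fun u => 0 <= u <= c); [intros u [Hu1 Hu2]; lra|].
        apply Hq; lra.
    + intros Hct. apply cont_ext with (fun u => g (p u)).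
      * intros u [_ Hu]. destruct (Rle_dec u c); [|reflexivity].
        replace u with c by lra. auto.
      * split; [lra|auto].
      * apply cont_comp with (dV := dY) (VV := V).
        -- apply cont_sub with (B := fun u => c <= u <= d); [intros u [Hu1 Hu2]; lra|].
           apply Hp; lra.
        -- split; [lra|auto].
        -- intros u [Hu1 Hu2]. apply HV; lra.
        -- apply Hg, HV; lra.
  - intros t Ht. destruct (Rle_dec t c); [apply Hfq; lra|]. apply Hfg, HV; lra.
  - destruct (Rle_dec 0 c); [reflexivity|lra].
Qed.
End Glue.


Lemma div_facts s k : 0 < s -> 1 <= k -> 0 < s / k <= s /\ s / k * k = s.
Proof.
  intros Hs Hk. assert (E : s / k * k = s) by (field; lra).
  split; auto. split.
  - apply Rdiv_lt_0_compat; lra.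
  - nra.
Qed.

Lemma arch_tn s tau : 0 < s -> tau < s ->
  exists N, forall n, (N <= n)%nat -> tau <= s - s / (INR n + 1).
Proof.
  intros Hs Ht. destruct (INR_unbounded (s / (s - tau))) as [N HN].
  exists N. intros n Hn. apply le_INR in Hn.
  assert (Ez : s / (s - tau) * (s - tau) = s) by (field; lra).
  pose proof (pos_INR n).
  destruct (div_facts s (INR n + 1) Hs ltac:(lra)) as [[H1 H2] H3].
  nra.
Qed.

Section Exist.
Variables (X Y : Type) (dX : X -> X -> R) (dY : Y -> Y -> R) (f : X -> Y)
  (hX : is_metric dX) (hY : is_metric dY) (hloc : local_homeomorphism dX dY f)
  (hcomp : complete_metric dX) (alpha : R) (halpha : 0 < alpha)
  (hD : forall x, lower_dini_ge dX dY f x alpha).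

Definition LP (p : R -> Y) x0 s (q : R -> X) : Prop :=
  cont_on dX q 0 s /\ (forall t, 0 <= t <= s -> f (q t) = p t) /\ q 0 = x0.

Lemma LP_restr p x0 s q t : 0 <= t <= s -> LP p x0 s q -> LP p x0 t q.
Proof.
  intros Ht [H1 [H2 H3]]. split; [|split]; auto.
  - apply cont_on_sub with 0 s; auto; lra.
  - intros u Hu; apply H2; lra.
Qed.

Lemma g_f_id (U : X -> Prop) (V : Y -> Prop) g x :
  (forall x', U x' -> V (f x')) -> (forall x1 x2, U x1 -> U x2 -> f x1 = f x2 -> x1 = x2) ->
  (forall y, V y -> U (g y) /\ f (g y) = y) -> U x -> g (f x) = x.
Proof.
  intros HfV Hinj Hg Hx. apply Hinj; auto; apply Hg; auto.
Qed.

Lemma ext_step p x0 s q : 0 <= s <= 1 -> cont_on dY p 0 1 -> LP p x0 s q ->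
  exists eta, 0 < eta /\ forall t, 0 <= t <= 1 -> t < s + eta -> exists q', LP p x0 t q'.
Proof.
  intros Hs Hp Hq.
  destruct (chart _ _ _ _ f hloc (q s)) as [U [V [g [HU [HUx [HV [HfV [Hinj [Hg Hgc]]]]]]]]].
  destruct Hq as [Hqc [Hqf Hq0]].
  assert (Vps : V (p s)) by (rewrite <- Hqf by lra; auto).
  destruct (HV _ Vps) as [rho [Hrho HVr]].
  destruct (Hp s Hs rho Hrho) as [del [Hdel Kp]].
  exists del. split; auto. intros t Ht Hts.
  destruct (Rle_dec t s) as [Hle|Hgt].
  - exists q. apply LP_restr with s; [lra|]. split; auto.
  - assert (Hgps : g (p s) = q s).
    { rewrite <- Hqf by lra. apply g_f_id with U V; auto. }
    destruct (glue X Y dX dY f q p V g s t ltac:(lra) Hqc Hqf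
      ltac:(apply cont_on_sub with 0 1; auto; lra)
      ltac:(intros u Hu; apply HVr, Kp; [lra| unfold dR; split_Rabs; lra])
      Hgc ltac:(intros y Hy; apply Hg; auto) Hgps) as [G1 [G2 G3]].
    eexists. split; [exact G1|]. split; [exact G2|]. rewrite G3; auto.
Qed.

Lemma limit_step p x0 s : 0 < s <= 1 -> cont_on dY p 0 1 ->
  (exists M, forall l, srt l -> Forall unit_interval l -> cs dY p l <= M) ->
  (forall t, 0 <= t < s -> exists q, LP p x0 t q) -> exists q, LP p x0 s q.
Proof.
  intros Hs Hp [M HM] IH.
  set (Lf := fun u => epsilon (inhabits (fun _ : R => x0)) (LP p x0 u)).
  assert (HLf : forall u, 0 <= u < s -> LP p x0 u (Lf u)).
  { intros u Hu. apply epsilon_spec. apply IH; auto. }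
  set (Q := fun t => Lf ((t + s) / 2) t).
  assert (ClA : forall u, 0 <= u < s -> forall t, 0 <= t <= u -> Q t = Lf u t).
  { intros u Hu t Ht. unfold Q.
    set (m := Rmin u ((t + s) / 2)).
    assert (Hm : t <= m /\ m <= u /\ m <= (t + s)/2) by (unfold m; rsolve).
    destruct (HLf ((t + s) / 2) ltac:(lra)) as [A1 [A2 A3]].
    destruct (HLf u Hu) as [B1 [B2 B3]].
    apply (lift_unique X Y dX dY f hX hloc _ _ 0 m).
    - lra.
    - apply cont_on_sub with 0 ((t + s) / 2); auto; lra.
    - apply cont_on_sub with 0 u; auto; lra.
    - intros t' Ht'. rewrite A2, B2; auto; lra.
    - congruence.
    - lra. }
  assert (ClB : forall u, 0 <= u < s -> LP p x0 u Q).
  { intros u Hu. destruct (HLf u Hu) as [B1 [B2 B3]]. split; [|split].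
    - apply cont_on_ext with (Lf u); [|exact B1]. intros; apply ClA; auto; lra.
    - intros t Ht. rewrite ClA with u t by (auto; lra). auto.
    - rewrite ClA with u 0 by (auto; lra). auto. }
  set (beta := alpha / 2).
  assert (Hbeta : 0 < beta < alpha) by (unfold beta; lra).
  assert (ClC : forall e, 0 < e -> exists tau, 0 <= tau < s /\
            forall a b, tau <= a < s -> tau <= b < s -> dX (Q a) (Q b) < e).
  { apply NNPP; intro Hn.
    assert (Hex : exists e0, 0 < e0 /\ forall tau, 0 <= tau < s ->
              exists a b, tau <= a < s /\ tau <= b < s /\ e0 <= dX (Q a) (Q b)).
    { apply NNPP; intro Hn2. apply Hn. intros e He. apply NNPP; intro Hn3.
      apply Hn2. exists e; split; auto. intros tau Htau. apply NNPP; intro Hn4.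
      apply Hn3. exists tau; split; auto. intros a b Ha Hb.
      destruct (Rlt_le_dec (dX (Q a) (Q b)) e); auto.
      exfalso; apply Hn4; exists a, b; auto. }
    destruct Hex as [e0 [He0 Hab]].
    assert (Hind : forall N tau, 0 <= tau < s -> exists l, srt l /\
              Forall (fun u => tau <= u < s) l /\ INR N * (beta * e0) <= cs dY p l).
    { induction N as [|N IHN]; intros tau Htau.
      - exists nil. simpl. split; auto. split; auto. lra.
      - assert (Hab' : exists a b, tau <= a <= b /\ b < s /\ e0 <= dX (Q a) (Q b)).
        { destruct (Hab tau Htau) as [a [b [Ha [Hb He]]]].
          destruct (Rle_dec a b).
          - exists a, b; repeat split; lra.
          - exists b, a. rewrite d_sym by auto. repeat split; lra. }
        destruct Hab' as [a [b [Ha [Hb He]]]].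
        destruct (ClB b ltac:(lra)) as [C1 [C2 C3]].
        destruct (fine_part X Y dX dY f hX hY alpha beta hD Hbeta Q p a b ltac:(lra)
                    ltac:(apply cont_on_sub with 0 b; auto; lra)
                    ltac:(intros; apply C2; lra)) as [l1 [S1 [F1 B1]]].
        destruct (IHN b ltac:(lra)) as [l2 [S2 [F2 B2]]].
        exists (l1 ++ l2). split; [|split].
        + apply srt_app with b; auto.
          * eapply Forall_impl; [|exact F1]; simpl; intros; lra.
          * eapply Forall_impl; [|exact F2]; simpl; intros; lra.
        + apply Forall_app; split.
          * eapply Forall_impl; [|exact F1]; simpl; intros; lra.
          * eapply Forall_impl; [|exact F2]; simpl; intros; lra.
        + pose proof (cs_app_ge _ _ hY p l1 l2). rewrite S_INR. nra. }
    destruct (INR_unbounded (M / (beta * e0))) as [N HN].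
    destruct (Hind N 0 ltac:(lra)) as [l [Sl [Fl Bl]]].
    assert (cs dY p l <= M).
    { apply HM; auto. eapply Forall_impl; [|exact Fl]. unfold unit_interval; intros; lra. }
    assert (Ez : M / (beta * e0) * (beta * e0) = M) by (field; nra).
    assert (0 < beta * e0) by nra.
    nra. }
  set (tn := fun n : nat => s - s / (INR n + 1)).
  assert (Htn : forall n, 0 <= tn n < s).
  { intros n. unfold tn. pose proof (pos_INR n).
    destruct (div_facts s (INR n + 1) ltac:(lra) ltac:(lra)) as [[H1 H2] _]. lra. }
  assert (ClD : exists xs, forall e, 0 < e -> exists tau, 0 <= tau < s /\
             forall t, tau <= t < s -> dX (Q t) xs < e).
  { destruct (hcomp (fun n => Q (tn n))) as [xs Hxs].
    - intros e He. destruct (ClC e He) as [tau [Htau Ht]].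
      destruct (arch_tn s tau ltac:(lra) ltac:(lra)) as [N HN].
      exists N. intros m n Hm Hn. apply Ht; split; try apply HN; auto; apply Htn.
    - exists xs. intros e He.
      destruct (ClC (e/2) ltac:(lra)) as [tau [Htau Ht]].
      destruct (arch_tn s tau ltac:(lra) ltac:(lra)) as [N1 HN1].
      destruct (Hxs (e/2) ltac:(lra)) as [N2 HN2].
      exists tau. split; auto. intros t Hts.
      specialize (HN2 (Nat.max N1 N2) ltac:(lia)).
      specialize (HN1 (Nat.max N1 N2) ltac:(lia)).
      specialize (Ht t (tn (Nat.max N1 N2)) Hts ltac:(split; auto; apply Htn)).
      pose proof (d_tri _ _ hX (Q t) (Q (tn (Nat.max N1 N2))) xs). lra. }
  destruct ClD as [xs Hxs].
  assert (Hps : p s = f xs).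
  { apply (d_small_eq _ _ hY). intros e He.
    destruct (f_cont X Y dX dY f hloc xs (e/2) ltac:(lra)) as [df [Hdf Kf]].
    destruct (Hp s ltac:(lra) (e/2) ltac:(lra)) as [dp [Hdp Kp]].
    destruct (Hxs df Hdf) as [tau [Htau Kt]].
    set (t := Rmax tau (s - dp/2)).
    assert (Ht : tau <= t < s /\ s - t < dp) by (unfold t; rsolve).
    specialize (Kt t ltac:(lra)). rewrite d_sym in Kt by auto.
    specialize (Kf (Q t) I Kt).
    specialize (Kp t ltac:(lra) ltac:(unfold dR; split_Rabs; lra)).
    destruct (ClB t ltac:(lra)) as [_ [C2 _]]. rewrite C2 in Kf by lra.
    pose proof (d_tri _ _ hY (p s) (p t) (f xs)). rewrite (d_sym _ _ hY (p t) (f xs)) in H. lra. }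
  destruct (chart _ _ _ _ f hloc xs) as [U [V [g [HU [HUx [HV [HfV [Hinj [Hg Hgc]]]]]]]]].
  destruct (HU _ HUx) as [r [Hr HUr]].
  assert (Vps : V (p s)) by (rewrite Hps; auto).
  destruct (HV _ Vps) as [rho [Hrho HVr]].
  destruct (Hp s ltac:(lra) rho Hrho) as [del [Hdel Kp]].
  destruct (Hxs r Hr) as [tau [Htau Kt]].
  set (c := Rmax tau (s - del/2)).
  assert (Hc : tau <= c < s /\ s - c < del) by (unfold c; rsolve).
  destruct (ClB c ltac:(lra)) as [C1 [C2 C3]].
  assert (UQc : U (Q c)) by (apply HUr; rewrite d_sym by auto; apply Kt; lra).
  assert (Hgc' : g (p c) = Q c) by (rewrite <- C2 by lra; apply g_f_id with U V; auto).
  destruct (glue X Y dX dY f Q p V g c s ltac:(lra) C1 C2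
      ltac:(apply cont_on_sub with 0 1; auto; lra)
      ltac:(intros u Hu; apply HVr, Kp; [lra| unfold dR; split_Rabs; lra])
      Hgc ltac:(intros y Hy; apply Hg; auto) Hgc') as [G1 [G2 G3]].
  eexists. split; [exact G1|]. split; [exact G2|]. rewrite G3; auto.
Qed.

Lemma lift_exists p x0 : cont_on dY p 0 1 ->
  (exists M, forall l, srt l -> Forall unit_interval l -> cs dY p l <= M) ->
  f x0 = p 0 -> exists q, LP p x0 1 q.
Proof.
  intros Hp HM H0.
  apply (real_ind (fun s => exists q, LP p x0 s q) 0 1); [lra| |lra].
  intros s Hs IH.
  assert (Ps : exists q, LP p x0 s q).
  { destruct (Req_dec s 0) as [->|Hs0].
    - exists (fun _ => x0). split; [|split]; auto.
      + intros t Ht. apply cont_const; auto.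
      + intros t Ht. replace t with 0 by lra. auto.
    - apply limit_step; auto. lra. }
  destruct Ps as [q Hq].
  apply ext_step with q; auto.
Qed.
End Exist.


Lemma tube {Y W : Type} (dY : Y -> Y -> R) (dW : W -> W -> R) (hY : is_metric dY) (hW : is_metric dW)
  (Phi : Y -> R -> W) (D : Y -> Prop) y1 a b : a <= b -> D y1 ->
  (forall u, a <= u <= b -> forall e, 0 < e -> exists sg, 0 < sg /\ forall y u', D y -> a <= u' <= b ->
     dY y1 y < sg -> dR u u' < sg -> dW (Phi y1 u) (Phi y u') < e) ->
  forall e, 0 < e -> exists del, 0 < del /\ forall y, D y -> dY y1 y < del ->
     forall u, a <= u <= b -> dW (Phi y1 u) (Phi y u) < e.
Proof.
  intros Hab Dy1 Hc e He.
  apply (real_ind (fun s => exists del, 0 < del /\ forall y, D y -> dY y1 y < del ->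
     forall u, a <= u <= s -> dW (Phi y1 u) (Phi y u) < e) a b Hab); [|lra].
  intros s Hs IH.
  destruct (Hc s Hs (e/2) ltac:(lra)) as [sg [Hsg K]].
  assert (KK : forall y u', D y -> a <= u' <= b -> dY y1 y < sg -> dR s u' < sg ->
             dW (Phi y1 u') (Phi y u') < e).
  { intros y u' Dy Hu' Hy Hd.
    pose proof (K y u' Dy Hu' Hy Hd). pose proof (K y1 u' Dy1 Hu' ltac:(rewrite d_refl; auto) Hd).
    pose proof (d_tri _ _ hW (Phi y1 u') (Phi y1 s) (Phi y u')).
    rewrite (d_sym _ _ hW (Phi y1 u') (Phi y1 s)) in H1. lra. }
  set (s0 := Rmax a (s - sg/2)).
  assert (Hs0 : a <= s0 <= s /\ s - s0 <= sg / 2) by (unfold s0; rsolve).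
  assert (P0 : exists del, 0 < del /\ forall y, D y -> dY y1 y < del ->
     forall u, a <= u <= s0 -> dW (Phi y1 u) (Phi y u) < e).
  { destruct (Rlt_le_dec s0 s) as [Hlt|Hge]; [apply IH; lra|].
    exists sg. split; auto. intros y Dy Hy u Hu. apply KK; [auto | lra | lra |].
    unfold s0 in *; rsolve. }
  destruct P0 as [d0 [Hd0 K0]].
  exists sg. split; auto. intros t Ht Hts.
  exists (Rmin d0 sg). split; [apply Rmin_pos; auto|].
  intros y Dy Hy u Hu. pose proof (Rmin_l d0 sg). pose proof (Rmin_r d0 sg).
  destruct (Rle_dec u s0).
  - apply K0; auto; lra.
  - apply KK; [auto | lra | lra | unfold dR; split_Rabs; lra].
Qed.

Section Param.
Variables (X Y : Type) (dX : X -> X -> R) (dY : Y -> Y -> R) (f : X -> Y)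
  (hX : is_metric dX) (hY : is_metric dY) (hloc : local_homeomorphism dX dY f).

Lemma param_cont (K : Y -> R -> Y) (D : Y -> Prop) y1 x0 (Lam : Y -> R -> X) :
  D y1 ->
  (forall y t, D y -> unit_interval t -> forall e, 0 < e -> exists del, 0 < del /\
     forall y' t', D y' -> unit_interval t' -> dY y y' < del -> dR t t' < del ->
       dY (K y t) (K y' t') < e) ->
  (forall y, D y -> cont_on dX (Lam y) 0 1 /\ (forall t, 0 <= t <= 1 -> f (Lam y t) = K y t)
                    /\ Lam y 0 = x0) ->
  forall e, 0 < e -> exists del, 0 < del /\ forall y, D y -> dY y1 y < del ->
     forall t, 0 <= t <= 1 -> dX (Lam y1 t) (Lam y t) < e.
Proof.
  intros Dy1 HK HL.
  assert (Main : forall s, 0 <= s <= 1 -> forall e, 0 < e -> exists del, 0 < del /\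
     forall y, D y -> dY y1 y < del -> forall t, 0 <= t <= s -> dX (Lam y1 t) (Lam y t) < e).
  2:{ intros e He. apply Main; auto; lra. }
  apply (real_ind (fun s => forall e, 0 < e -> exists del, 0 < del /\
     forall y, D y -> dY y1 y < del -> forall t, 0 <= t <= s -> dX (Lam y1 t) (Lam y t) < e) 0 1);
    [lra|].
  intros s Hs IH.
  destruct (HL y1 Dy1) as [L1c [L1f L10]].
  set (x := Lam y1 s).
  destruct (chart _ _ _ _ f hloc x) as [Uc [Vc [g [HU [HUx [HV [HfV [Hinj [Hg Hgc]]]]]]]]].
  destruct (HU _ HUx) as [r [Hr HUr]].
  assert (Vx : Vc (K y1 s)) by (rewrite <- L1f by lra; apply HfV; auto).
  destruct (HV _ Vx) as [rho [Hrho HVr]].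
  destruct (HK y1 s Dy1 Hs rho Hrho) as [eta0 [Heta0 K0]].
  destruct (L1c s Hs (r/2) ltac:(lra)) as [eta1 [Heta1 K1]].
  set (eta := Rmin eta0 eta1 / 2).
  assert (Heta : 0 < eta /\ 2 * eta <= eta0 /\ 2 * eta <= eta1).
  { unfold eta. pose proof (Rmin_l eta0 eta1). pose proof (Rmin_r eta0 eta1).
    pose proof (Rmin_pos eta0 eta1 Heta0 Heta1). lra. }
  set (s0 := Rmax 0 (s - eta)).
  assert (Hs0 : 0 <= s0 <= s /\ s - s0 <= eta) by (unfold s0; rsolve).
  assert (P0 : forall e, 0 < e -> exists del, 0 < del /\
     forall y, D y -> dY y1 y < del -> forall t, 0 <= t <= s0 -> dX (Lam y1 t) (Lam y t) < e).
  { destruct (Rlt_le_dec s0 s) as [Hlt|Hge]; [apply IH; lra|].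
    intros e He. exists 1. split; [lra|]. intros y Dy Hy t Ht.
    assert (s0 = 0) by (unfold s0 in *; rsolve).
    replace t with 0 by lra. destruct (HL y Dy) as [_ [_ Ly0]].
    rewrite L10, Ly0, d_refl; auto. }
  assert (Win1 : forall y u, D y -> 0 <= u <= 1 -> dY y1 y < eta0 -> dR s u < eta0 -> Vc (K y u)).
  { intros y u Dy Hu Hy Hd. apply HVr. apply K0; auto. }
  assert (Win2 : forall u, 0 <= u <= 1 -> dR s u < eta1 -> dX x (Lam y1 u) < r/2).
  { intros u Hu Hd. apply K1; auto. }
  exists eta. split; [lra|]. intros t Ht Hts e He.
  set (t' := Rmax t s0).
  assert (Ht' : s0 <= t' <= 1 /\ t <= t' /\ t' < s + eta) by (unfold t'; rsolve).
  assert (Hwin : forall u, s0 <= u <= t' -> 0 <= u <= 1 /\ dR s u <= eta).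
  { intros u Hu. split; [lra|]. unfold dR; split_Rabs; lra. }
  set (e' := Rmin e (r/2)).
  assert (He' : 0 < e' /\ e' <= e /\ e' <= r/2).
  { unfold e'. pose proof (Rmin_l e (r/2)). pose proof (Rmin_r e (r/2)).
    pose proof (Rmin_pos e (r/2) He ltac:(lra)). lra. }
  destruct (P0 e' ltac:(lra)) as [da [Hda Ka]].
  destruct (tube dY dX hY hX (fun y u => g (K y u)) (fun y => D y /\ dY y1 y < eta0) y1 s0 t'
     ltac:(lra) ltac:(split; auto; rewrite d_refl; auto)) with (e := e) as [db [Hdb Kb]]; auto.
  { intros u Hu e0 He0. destruct (Hwin u Hu) as [Hu1 Hu2].
    assert (VK : Vc (K y1 u)) by (apply Win1; auto; [rewrite d_refl; auto| lra]).
    destruct (Hgc _ VK e0 He0) as [s1 [Hs1 Ks1]].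
    destruct (HK y1 u Dy1 Hu1 s1 Hs1) as [s2 [Hs2 Ks2]].
    exists s2. split; auto. intros y u' [Dy Hy] Hu' Hy2 Hdu.
    destruct (Hwin u' Hu') as [Hu'1 Hu'2].
    apply Ks1; [apply Win1; auto; lra|]. apply Ks2; auto. }
  assert (Ident : forall y, D y -> dY y1 y < Rmin da eta0 -> forall u, s0 <= u <= t' ->
            Lam y u = g (K y u)).
  { intros y Dy Hy. pose proof (Rmin_l da eta0). pose proof (Rmin_r da eta0).
    destruct (HL y Dy) as [Lc [Lf L0]].
    apply (lift_unique X Y dX dY f hX hloc _ _ s0 t').
    - lra.
    - apply cont_on_sub with 0 1; auto; lra.
    - intros u Hu. destruct (Hwin u Hu) as [Hu1 Hu2].
      apply cont_comp with (dV := dY) (VV := Vc).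
      + intros e0 He0. destruct (HK y u Dy Hu1 e0 He0) as [s2 [Hs2 Ks2]].
        exists s2. split; auto. intros u' Hu' Hd.
        destruct (Hwin u' Hu') as [Hu'1 _].
        apply Ks2; auto. rewrite d_refl; auto.
      + exact Hu.
      + intros u' Hu'. destruct (Hwin u' Hu') as [Hu'1 Hu'2]. apply Win1; auto; lra.
      + apply Hgc. apply Win1; auto; lra.
    - intros u Hu. destruct (Hwin u Hu) as [Hu1 Hu2]. rewrite Lf by auto.
      symmetry. apply Hg. apply Win1; auto; lra.
    - destruct (Hwin s0 ltac:(lra)) as [Hu1 Hu2].
      assert (UL : Uc (Lam y s0)).
      { apply HUr. pose proof (Win2 s0 Hu1 ltac:(lra)).
        pose proof (Ka y Dy ltac:(lra) s0 ltac:(lra)).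
        pose proof (d_tri _ _ hX x (Lam y1 s0) (Lam y s0)). lra. }
      rewrite <- Lf by lra. symmetry. apply g_f_id with Uc Vc; auto. }
  exists (Rmin da (Rmin eta0 db)). split.
  { apply Rmin_pos; auto. apply Rmin_pos; auto. }
  intros y Dy Hy u Hu.
  pose proof (Rmin_l da (Rmin eta0 db)). pose proof (Rmin_r da (Rmin eta0 db)).
  pose proof (Rmin_l eta0 db). pose proof (Rmin_r eta0 db).
  destruct (Rle_dec u s0).
  - apply Rlt_le_trans with e'; [|lra]. apply Ka; auto; lra.
  - assert (Hmin : dY y1 y < Rmin da eta0) by (unfold Rmin; destruct (Rle_dec da eta0); lra).
    assert (Hmin1 : dY y1 y1 < Rmin da eta0) by (rewrite d_refl; auto; apply Rmin_pos; auto).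
    rewrite (Ident y Dy Hmin u ltac:(lra)), (Ident y1 Dy1 Hmin1 u ltac:(lra)).
    apply Kb; [split; auto; lra| lra| lra].
Qed.
End Param.


Theorem mainTheorem11 (X Y : Type) (dX : X -> X -> R) (dY : Y -> Y -> R)
  (f : X -> Y)
  (hX : is_metric dX) (hY : is_metric dY)
  (hiso : no_isolated_points dX)
  (hloc : local_homeomorphism dX dY f)
  (hcomp : complete_metric dX)
  (hpc : path_connected dY)
  (hRc : locally_R_contractible dY)
  (alpha : R) (halpha : 0 < alpha)
  (hD : forall x, lower_dini_ge dX dY f x alpha) :
  covering_projection dX dY f.
Proof.
  split; [exact (proj1 hloc)|].
  intros y0.
  destruct (hRc y0) as [U [HU [Uy0 [H [Hmap [Hjoint [Hy0t [H0 [H1 Hrect]]]]]]]]].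
  exists U. split; [exact HU|]. split; [exact Uy0|].
  assert (Hpath : forall y, U y -> cont_on dY (H y) 0 1).
  { intros y Uy t Ht e He. destruct (Hjoint y t Uy Ht e He) as [d [Hd K]].
    exists d; split; auto. intros t' Ht' Hdt. apply K; auto. rewrite d_refl; auto. }
  assert (Hbound : forall y, U y -> exists M, forall l, srt l -> Forall unit_interval l ->
                     cs dY (H y) l <= M).
  { intros y Uy. apply rect_list; auto. }
  set (Lam := fun (x0 : X) (y : Y) => epsilon (inhabits (fun _ : R => x0)) (LP X Y dX f (H y) x0 1)).
  assert (HLam : forall x0 y, f x0 = y0 -> U y -> LP X Y dX f (H y) x0 1 (Lam x0 y)).
  { intros x0 y Hx0 Uy. apply epsilon_spec.
    apply (lift_exists X Y dX dY f hX hY hloc hcomp alpha halpha hD); auto.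
    rewrite H0; auto. }
  assert (Gcont : forall x0, f x0 = y0 -> forall y1, U y1 ->
            cont_within dY dX U (fun y => Lam x0 y 1) y1).
  { intros x0 Hx0 y1 Uy1 e He.
    destruct (param_cont X Y dX dY f hX hY hloc H U y1 x0 (Lam x0) Uy1 Hjoint
               ltac:(intros y Uy; apply HLam; auto) e He) as [d [Hd K]].
    exists d; split; auto. intros y Uy Hy. apply K; auto; lra. }
  assert (Hrev : forall x, U (f x) -> exists x0, f x0 = y0 /\ Lam x0 (f x) 1 = x).
  { intros x Ux. set (y := f x).
    set (p' := fun t => H y (1 - t)).
    assert (Cp' : cont_on dY p' 0 1) by (apply cont_rev; apply Hpath; auto).
    assert (Bp' : exists M, forall l, srt l -> Forall unit_interval l -> cs dY p' l <= M).
    { destruct (Hbound y Ux) as [M HM]. exists M. intros l Sl Fl.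
      unfold p'. rewrite <- cs_map, <- cs_rev by auto.
      apply HM.
      - apply asrt_rev, srt_map_neg; auto.
      - apply Forall_rev, Forall_map. eapply Forall_impl; [|exact Fl].
        unfold unit_interval; intros; lra. }
    destruct (lift_exists X Y dX dY f hX hY hloc hcomp alpha halpha hD p' x Cp' Bp')
      as [q' [Qc [Qf Q0]]].
    { unfold p'. replace (1 - 0) with 1 by ring. rewrite H1; auto. }
    exists (q' 1). assert (Hx0 : f (q' 1) = y0).
    { rewrite Qf by lra. unfold p'. replace (1 - 1) with 0 by ring. apply H0; auto. }
    split; auto.
    destruct (HLam (q' 1) y Hx0 Ux) as [Lc [Lf L0]].
    assert (E : forall t, 0 <= t <= 1 -> Lam (q' 1) y t = q' (1 - t)).
    { apply (lift_unique X Y dX dY f hX hloc _ _ 0 1).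
      - lra.
      - exact Lc.
      - apply cont_rev; auto.
      - intros t Ht. rewrite Lf, Qf by lra. unfold p'. f_equal. ring.
      - rewrite L0. f_equal. ring. }
    rewrite E by lra. replace (1 - 1) with 0 by ring. auto. }
  set (Idx := {x0 : X | f x0 = y0}).
  set (W := fun (i : Idx) x => U (f x) /\ Lam (proj1_sig i) (f x) 1 = x).
  exists Idx, W. split; [|split; [|split]].
  -
    intros [x0 Hx0] x [Ux Ex]. simpl in Ex.
    destruct (chart _ _ _ _ f hloc x) as [Uc [Vc [g [HUc [HUx [HV [HfV [Hinj [Hg Hgc]]]]]]]]].
    destruct (HUc _ HUx) as [r [Hr HUr]].
    destruct (Gcont x0 Hx0 (f x) Ux r Hr) as [d1 [Hd1 K1]].
    destruct (HU _ Ux) as [d2 [Hd2 K2]].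
    destruct (f_cont X Y dX dY f hloc x (Rmin d1 d2) ltac:(apply Rmin_pos; auto)) as [d3 [Hd3 K3]].
    exists (Rmin d3 r). split; [apply Rmin_pos; auto|].
    intros x' Hx'. pose proof (Rmin_l d3 r). pose proof (Rmin_r d3 r).
    pose proof (Rmin_l d1 d2). pose proof (Rmin_r d1 d2).
    specialize (K3 x' I ltac:(lra)).
    assert (Ux' : U (f x')) by (apply K2; lra).
    split; auto. simpl.
    specialize (K1 (f x') Ux' ltac:(lra)). rewrite Ex in K1.
    destruct (HLam x0 (f x') Hx0 Ux') as [_ [Lf _]].
    apply Hinj.
    + apply HUr; auto.
    + apply HUr; lra.
    + rewrite Lf by lra. apply H1; auto.
  -
    intros [xi Hi] [xj Hj] x [Ux Ei] [_ Ej]. simpl in Ei, Ej.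
    destruct (HLam xi (f x) Hi Ux) as [Ic [If I0]].
    destruct (HLam xj (f x) Hj Ux) as [Jc [Jf J0]].
    assert (E : forall t, 0 <= t <= 1 -> Lam xi (f x) (1 - t) = Lam xj (f x) (1 - t)).
    { apply (lift_unique X Y dX dY f hX hloc (fun t => Lam xi (f x) (1 - t))
               (fun t => Lam xj (f x) (1 - t)) 0 1).
      - lra.
      - apply cont_rev; auto.
      - apply cont_rev; auto.
      - intros t Ht. rewrite If, Jf by lra. reflexivity.
      - replace (1 - 0) with 1 by ring. congruence. }
    specialize (E 1 ltac:(lra)). replace (1 - 1) with 0 in E by ring.
    rewrite I0, J0 in E. subst xj. f_equal. apply proof_irrelevance.
  -
    intros x. split.
    + intros Ux. destruct (Hrev x Ux) as [x0 [Hx0 E]].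
      exists (exist _ x0 Hx0). split; auto.
    + intros [i [Ux _]]. exact Ux.
  -
    intros [x0 Hx0]. split; [|split; [|split]].
    + intros x _. apply cont_sub with (B := fun _ => True); auto.
      apply (f_cont X Y dX dY f hloc).
    + intros x [Ux _]. exact Ux.
    + intros x1 x2 [U1 E1] [U2 E2] Ef. simpl in E1, E2. rewrite <- E1, <- E2, Ef. reflexivity.
    + exists (fun y => Lam x0 y 1). split.
      * intros y Uy. destruct (HLam x0 y Hx0 Uy) as [_ [Lf _]].
        assert (Ef : f (Lam x0 y 1) = y) by (rewrite Lf by lra; apply H1; auto).
        split; auto. split; [rewrite Ef; auto|]. simpl. rewrite Ef. reflexivity.
      * intros y Uy. apply Gcont; auto.
Qed.
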